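(* Let $R$ be a $\mathbb{G}$-stopping time and $[R]=\{(t,\omega)\in\mathbb{R}_+\times\Omega: t=R(\omega)\}$ its graph. Then $[R]\in\mathcal{L}^o$ if and only if $$\{R<\infty\}\cap\mathcal{G}_R=\{R<\infty\}\cap\big(\mathcal{N}\vee\sigma(\tau\nmid R)\vee\mathcal{F}_R\big).$$
   Context: Let $(\Omega,\mathcal{A},\mathbb{Q})$ be a probability space with a right-continuous filtration $\mathbb{F}=(\mathcal{F}_t)_{t\ge0}$ such that $\mathcal{F}_0$ contains $\mathcal{N}^{\mathcal{F}_\infty}$, where for a $\sigma$-algebra $\mathcal{T}\subset\mathcal{A}$, $\mathcal{N}^{\mathcal{T}}$ denotes the $\sigma$-algebra generated by all subsets of $\mathcal{T}$-measurable $\mathbb{Q}$-null sets. Let $\tau$ be a random variable with values in $[0,\infty]$, let $\mathcal{N}=\mathcal{N}^{\sigma(\tau)\vee\mathcal{F}_\infty}$, and let $\mathbb{G}=(\mathcal{G}_t)_{t\ge0}$ with $\mathcal{G}_t=\mathcal{N}\vee\bigcap_{s>t}(\mathcal{F}_s\vee\sigma(\tau\wedge s))$. Identities are understood up to $\mathcal{N}$-measurable $\mathbb{Q}$-null sets. For a function $Y''$ on $[0,\infty]\times(\mathbb{R}_+\times\Omega)$, $Y''(\tau)$ denotes $(t,\omega)\mapsto Y''(\tau(\omega),t,\omega)$. A $\mathbb{G}$-optional process $Y$ satisfies the optional splitting formula on a $\mathbb{G}$-optional set $A$ if there exist $Y'\in\mathcal{O}(\mathbb{F})$ and a $\mathcal{B}[0,\infty]\otimes\mathcal{O}(\mathbb{F})$-measurable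 $Y''$ with $Y\mathbf{1}_A=(Y'\mathbf{1}_{[0,\tau)}+Y''(\tau)\mathbf{1}_{[\tau,\infty)})\mathbf{1}_A$; $\mathcal{L}^o$ is the family of $\mathbb{G}$-optional sets on which every $\mathbb{G}$-optional process satisfies it. For a random time $R$, $\mathcal{F}_R=\sigma\{X_R\mathbf{1}_{\{R<\infty\}}: X\ \mathbb{F}\text{-optional}\}$. For $a,b\in[0,\infty]$, $a\nmid b=a$ if $a\le b$ and $=\infty$ if $a>b$ (so $\tau\nmid R$ is the random variable $\omega\mapsto\tau(\omega)\nmid R(\omega)$). For a set $D\subset\Omega$ and a $\sigma$-algebra $\mathcal{T}$, $D\cap\mathcal{T}=\{D\cap B: B\in\mathcal{T}\}$. *)

(* Defs.v *)
From HB Require Import structures.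
From mathcomp Require Import all_boot all_order all_algebra.
From mathcomp Require Import all_classical all_reals all_analysis.
From mathcomp Require Import measurable_realfun.
Set Implicit Arguments. Unset Strict Implicit. Unset Printing Implicit Defensive.
Import Order.TTheory GRing.Theory Num.Theory.
Import numFieldNormedType.Exports.
Local Open Scope classical_set_scope.
Local Open Scope ring_scope.

Section Defs.
Context {R : realType} {Omega : Type}.

Definition sjoin (A B : set_system Omega) : set_system Omega := <<s A `|` B >>.

Definition sigma_rv (f : Omega -> \bar R) : set_system Omega :=
  <<s [set f @^-1` B | B in [set B : set (\bar R) | measurable B]] >>.

Definition sigma_fam (P : (Omega -> R) -> Prop) : set_system Omega :=
  <<s [set E | exists f B, P f /\ measurable (B : set R) /\ E = f @^-1` B] >>.

Definition negl_sys (Q : set Omega -> \bar R) (T : set_system Omega)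
  : set_system Omega :=
  <<s [set E | exists B, T B /\ Q B = 0%E /\ E `<=` B] >>.

Definition sys_inf (F : R -> set_system Omega) : set_system Omega :=
  <<s \bigcup_(t in [set t : R | 0 <= t]) F t >>.

Definition Dom : set (R * Omega) := [set p | 0 <= p.1].

Definition meas_wrt {U : Type} (D : set U) (S : set_system U) (f : U -> R) :=
  forall B : set R, measurable B -> S (D `&` f @^-1` B).

Definition cadlag (X : R * Omega -> R) : Prop :=
  forall w : Omega,
    (forall t : R, 0 <= t -> (fun s => X (s, w)) @ t^'+ --> X (t, w)) /\
    (forall t : R, 0 < t -> exists l : R, (fun s => X (s, w)) @ t^'- --> l).

Definition adapted (F : R -> set_system Omega) (X : R * Omega -> R) : Prop :=
  forall t : R, 0 <= t -> forall B : set R, measurable B ->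
    F t ((fun w => X (t, w)) @^-1` B).

Definition optional (F : R -> set_system Omega) : set_system (R * Omega) :=
  <<s Dom, [set E | exists X B, cadlag X /\ adapted F X /\
                      measurable (B : set R) /\ E = Dom `&` X @^-1` B] >>.

Definition Dom2 : set (\bar R * (R * Omega)) :=
  [set x | (0 <= x.1)%E /\ 0 <= x.2.1].

Definition prod_sys (S : set_system (R * Omega))
  : set_system (\bar R * (R * Omega)) :=
  <<s Dom2, [set E | exists (A : set (\bar R)) B, measurable A /\
          A `<=` [set x | (0 <= x)%E] /\ S B /\ E = A `*` B] >> .

Section Model.
Variables (Q : set Omega -> \bar R) (F : R -> set_system Omega)
          (tau : Omega -> \bar R).

Definition sigma_tau_Finf : set_system Omega :=
  sjoin (sigma_rv tau) (sys_inf F).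
Definition Nsys : set_system Omega := negl_sys Q sigma_tau_Finf.

Definition Gfilt (t : R) : set_system Omega :=
  sjoin Nsys (\bigcap_(s in [set s : R | t < s])
                 sjoin (F s) (sigma_rv (fun w => Order.min (tau w) s%:E))).

(* E is contained in an N-measurable Q-null set; equivalently in a
   (sigma(tau) \/ F_oo)-measurable Q-null set *)
Definition Nnull (E : set Omega) : Prop :=
  exists B, sigma_tau_Finf B /\ Q B = 0%E /\ E `<=` B.

Definition osf (Y : R * Omega -> R) (A : set (R * Omega)) : Prop :=
  exists (Y' : R * Omega -> R) (Y'' : \bar R * (R * Omega) -> R),
    meas_wrt Dom (optional F) Y' /\
    meas_wrt Dom2 (prod_sys (optional F)) Y'' /\
    Nnull [set w | exists t : R, A (t, w) /\
       Y (t, w) <> (if (t%:E < tau w)%E then Y' (t, w)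
                    else Y'' (tau w, (t, w)))].

Definition Lo (A : set (R * Omega)) : Prop :=
  optional Gfilt A /\ A `<=` Dom /\
  forall Y : R * Omega -> R, meas_wrt Dom (optional Gfilt) Y -> osf Y A.

Definition stopping_time (H : R -> set_system Omega) (S : Omega -> \bar R) :=
  (forall w, (0 <= S w)%E) /\
  forall t : R, 0 <= t -> H t [set w | (S w <= t%:E)%E].

Definition sys_at_stop (H : R -> set_system Omega) (S : Omega -> \bar R)
  : set_system Omega :=
  [set A | sys_inf H A /\
     forall t : R, 0 <= t -> H t (A `&` [set w | (S w <= t%:E)%E])].

Definition F_at (S : Omega -> \bar R) : set_system Omega :=
  sigma_fam (fun f => exists X : R * Omega -> R,
     meas_wrt Dom (optional F) X /\
     f = (fun w => if (S w < +oo)%E then X (fine (S w), w) else 0)).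

Definition tau_nmid (S : Omega -> \bar R) : Omega -> \bar R :=
  fun w => if (tau w <= S w)%E then tau w else +oo%E.

End Model.

Definition graph (S : Omega -> \bar R) : set (R * Omega) :=
  [set p | 0 <= p.1 /\ p.1%:E = S p.2].

Definition trace (D : set Omega) (T : set_system Omega) : set_system Omega :=
  [set D `&` B | B in T].

End Defs.

(* Main.v *)
Require Import Defs.
From HB Require Import structures.
From mathcomp Require Import all_boot all_order all_algebra.
From mathcomp Require Import all_classical all_reals all_analysis.
From mathcomp Require Import measurable_realfun.
From mathcomp Require Import lra.
Set Implicit Arguments. Unset Strict Implicit. Unset Printing Implicit Defensive.
Import numFieldNormedType.Exports.
Import Order.TTheory GRing.Theory Num.Theory.
Local Open Scope classical_set_scope.
Local Open Scope ring_scope.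
Section SA.
Context {T : Type} {U : set T} {M : set_system T} (hM : sigma_algebra U M).

Lemma sa0 : M set0. Proof. by case: hM. Qed.
Lemma saD A : M A -> M (U `\` A). Proof. by case: hM => _ h _; apply: h. Qed.
Lemma saU (A : (set T)^nat) : (forall n, M (A n)) -> M (\bigcup_n A n).
Proof. by case: hM => _ _ h; apply: h. Qed.
Lemma saT : M U. Proof. by rewrite -(setD0 U); apply: saD; apply: sa0. Qed.
Lemma saU2 A B : M A -> M B -> M (A `|` B).
Proof.
move=> hA hB; rewrite -bigcup2E; apply: saU => -[|[|n]] //=; exact: sa0.
Qed.
Lemma saIU A : M A -> M (U `&` A).
Proof. move=> hA; rewrite -(setDD U A); apply: saD; exact: saD. Qed.
Lemma saI A B : A `<=` U -> M A -> M B -> M (A `&` B).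
Proof.
move=> AU hA hB.
have -> : A `&` B = U `\` ((U `\` A) `|` (U `\` B)).
  apply/seteqP; split => x.
    by move=> [Ax Bx]; split; [exact: AU| move=> [][]].
  move=> [Ux H]; split; apply: contrapT => nx; apply: H; [left|right]; by split.
by apply: saD; apply: saU2; apply: saD.
Qed.
Lemma saDs A B : A `<=` U -> M A -> M B -> M (A `\` B).
Proof.
move=> AU hA hB; have -> : A `\` B = A `&` (U `\` B).
  apply/seteqP; split => x; first by move=> [Ax nB]; split => //; split => //; exact: AU.
  by move=> [Ax [_ nB]].
by apply: saI => //; apply: saD.
Qed.
Lemma saIn (A : (set T)^nat) : (forall n, M (A n)) -> M (U `&` \bigcap_n A n).
Proof.
move=> hA; have -> : U `&` \bigcap_n A n = U `\` \bigcup_n (U `\` A n).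
  apply/seteqP; split => x.
    by move=> [Ux IA]; split => // -[n _ [_ nA]]; apply: nA; apply: IA.
  move=> [Ux H]; split => // n _; apply: contrapT => nA; apply: H; exists n => //.
by apply: saD; apply: saU => n; apply: saD.
Qed.
End SA.

Lemma sa_restr {T : Type} (M : set_system T) (P : set T) :
  sigma_algebra setT M -> M P -> sigma_algebra P M.
Proof.
move=> hM hP; split; first exact: (sa0 hM).
  move=> A hA; have -> : P `\` A = P `&` (setT `\` A).
    by apply/seteqP; split => x; [move=> [? ?]; split => //| move=> [? [? ?]]].
  by apply: (saI hM) => //; apply: (saD hM).
by move=> A hA; apply: (saU hM).
Qed.

Lemma borel_rays (R : realType) (B : set R) : measurable B ->
  <<s [set A | exists x, A = `]-oo, x[%classic] >> B.
Proof. move=> mB. have e := RGenInftyO.measurableE R.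
have h : (fun M : set (set R) => M B) <<s (@ocitv R) >> by exact: mB.
have := @eq_ind _ _ (fun M : set (set R) => M B) h _ e. exact. Qed.

Lemma rays_meas {R : realType} {T : Type} (P : set T) (M : set_system T)
  (g : T -> R) : sigma_algebra P M ->
  (forall a : R, M (P `&` g @^-1` `]-oo, a[)) ->
  forall B : set R, measurable B -> M (P `&` g @^-1` B).
Proof.
move=> hM hr B /borel_rays.
have H : <<s [set A | exists x, A = `]-oo, x[%classic] >> `<=` [set B | M (P `&` g @^-1` B)].
2: exact: H.
apply: smallest_sub; last by move=> A [x ->]; apply: hr.
split.
- by rewrite /= preimage_set0 setI0; exact: (sa0 hM).
- move=> A /= hA; rewrite setTD preimage_setC.
  have -> : P `&` ~` (g @^-1` A) = P `\` (P `&` g @^-1` A).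
    by apply/seteqP; split => x; [move=> [? ?]; split => // -[]|move=> [? H]; split => // ?; apply: H].
  exact: (saD hM).
- by move=> A /= hA; rewrite preimage_bigcup setI_bigcupr; apply: (saU hM).
Qed.

Lemma rc_ball (R : realType) (f : R -> R) (s : R) : f @ s^'+ --> f s ->
  forall e, 0 < e -> exists2 del, 0 < del &
    forall r, s < r -> r < s + del -> `|f s - f r| < e.
Proof.
move=> /cvgrPdist_lt h e e0; have := h e e0.
move=> /nbhs_ballP [del del0 H]; exists del => // r sr rs.
apply: (H r) => //=.
by rewrite -ball_normE /= distrC ger0_norm ?subr_ge0 ?(ltW sr)// ltrBlDl.
Qed.

Lemma grid_trunc (R : realType) (s : R) (n j : nat) : 0 <= s ->
  ((n.+1%:R)^-1 * j%:R <= s) && (s < (n.+1%:R)^-1 * j.+1%:R) =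
  (Num.Def.trunc (n.+1%:R * s) == j).
Proof.
move=> s0; rewrite truncn_eq ?mulr_ge0 // ler_pdivrMl ?ltr0Sn //.
by rewrite ltr_pdivlMl ?ltr0Sn.
Qed.

Lemma inv_le (R : realType) (n m : nat) : (n <= m)%N ->
  (m.+1%:R)^-1 <= (n.+1%:R)^-1 :> R.
Proof. by move=> nm; rewrite lef_pV2 ?posrE ?ltr0Sn // ler_nat ltnS. Qed.

Lemma const_set {T : Type} (M : set_system T) (P : Prop) :
  sigma_algebra setT M -> M [set _ | P].
Proof.
move=> hM; case: (pselect P) => p.
  by rewrite (_ : [set _ | P] = setT); [exact: (saT hM)|apply/seteqP; split].
by rewrite (_ : [set _ | P] = set0); [exact: (sa0 hM)|apply/seteqP; split].
Qed.
Lemma step_rc (R : realType) (r : \bar R) (t : R) :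
  (fun s : R => if (r <= s%:E)%E then 1 else 0 : R) @ t^'+ -->
  (if (r <= t%:E)%E then 1 else 0 : R).
Proof.
apply: cvg_near_cst.
have [rt|tr] := leP r t%:E.
  apply/nbhs_ballP; exists 1 => //= s _ ts.
  by rewrite (le_trans rt) // lee_fin ltW.
have [ry|ry] := eqVneq r +oo%E.
  apply/nbhs_ballP; exists 1 => //= s _ ts.
  by rewrite ry leNgt ltry.
have rf : r \is a fin_num.
  by rewrite fin_numE ry andbT; apply/eqP => rN; move: tr; rewrite rN ltNge leNye.
apply/nbhs_ballP; exists (fine r - t) => /=.
  by rewrite subr_gt0 -lte_fin fineK.
move=> s hs ts; rewrite leNgt -(fineK rf) lte_fin.
move: hs; rewrite -ball_normE /= distrC ger0_norm ?subr_ge0 ?(ltW ts) //.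
by rewrite ltrBlDl addrC subrK => ->.
Qed.

Lemma step_ll (R : realType) (r : \bar R) (t : R) : 0 < t ->
  exists l : R, (fun s : R => if (r <= s%:E)%E then 1 else 0 : R) @ t^'- --> l.
Proof.
move=> t0; exists (if (r < t%:E)%E then 1 else 0); apply: cvg_near_cst.
have [rt|tr] := ltP r t%:E; last first.
  apply/nbhs_ballP; exists 1 => //= s _ st.
  have st' : (s%:E < t%:E)%E by rewrite lte_fin.
  by rewrite leNgt (lt_le_trans st' tr).
have [rN|rN] := eqVneq r -oo%E.
  apply/nbhs_ballP; exists 1 => //= s _ ts.
  by rewrite rN leNye.
have rf : r \is a fin_num.
  by rewrite fin_numE rN /=; apply/eqP => ry; move: rt; rewrite ry ltNge leey.
apply/nbhs_ballP; exists (t - fine r) => /=.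
  by rewrite subr_gt0 -lte_fin fineK.
move=> s hs st; rewrite -(fineK rf) lee_fin.
move: hs; rewrite -ball_normE /= ger0_norm ?subr_ge0 ?(ltW st) //.
move: (fine r) => x h; have -> // : x <= s by lra.
Qed.

Lemma trace_sa {T : Type} (U : set T) (M : set_system T) :
  sigma_algebra U M -> sigma_algebra setT [set A | M (U `&` A)].
Proof.
move=> hM; split => /=.
- by rewrite setI0; exact: (sa0 hM).
- move=> A hA; rewrite setTD (_ : U `&` ~` A = U `\` (U `&` A)).
    exact: (saD hM).
  by apply/seteqP; split => x /=; [move=> [Ux nA]; split => // -[]|move=> [Ux H]; split => // Ax; apply: H].
- by move=> A hA; rewrite setI_bigcupr; exact: (saU hM).
Qed.

Lemma ind_meas {R : realType} {T : Type} (U : set T) (M : set_system T)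
  (E : set T) : sigma_algebra U M -> M E ->
  meas_wrt U M (fun p => if `[< E p >] then 1 else 0 : R).
Proof.
move=> hM hE B mB; have hM' := trace_sa hM.
rewrite (_ : _ @^-1` _ = (E `&` [set _ | B 1]) `|` (~` E `&` [set _ | B 0])).
  2: apply/seteqP; split => p /=.
  2: by case: (pselect (E p)) => h; [rewrite asboolT //; left|rewrite asboolF //; right].
  2: by move=> [[Ep B1]|[nE B0]]; [rewrite asboolT|rewrite asboolF].
change ([set A | M (U `&` A)]
   ((E `&` [set _ | B 1]) `|` (~` E `&` [set _ | B 0]))).
  apply: (saU2 hM'); apply: (saI hM') => //; try exact: const_set hM'.
    by rewrite /= (_ : U `&` E = U `\` (U `\` E)); [apply: (saD hM); apply: (saD hM)|rewrite setDD].
  rewrite -setTD; apply: (saD hM').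
  by rewrite /= (_ : U `&` E = U `\` (U `\` E)); [apply: (saD hM); apply: (saD hM)|rewrite setDD].
Qed.

Definition qseq (R : realType) (k : nat) : R := ratr (odflt 0%Q (@pickle_inv rat k)).

Lemma qseq_dense (R : realType) (x y : R) : x < y -> exists k, x < qseq R k < y.
Proof.
move=> xy; have [q hq] := rat_in_itvoo xy; exists (pickle q).
by rewrite /qseq pickleK_inv /=; move: hq; rewrite in_itv.
Qed.

Lemma inf_q (R : realType) (y : R) (P : set nat) :
  (forall k, P k <-> y < qseq R k) ->
  ereal_inf [set (qseq R k)%:E | k in P] = y%:E.
Proof.
move=> hP; apply/eqP; rewrite eq_le; apply/andP; split.
  apply/lee_addgt0Pr => e e0.
  have ye : y < y + e by rewrite ltrDl.
  have [k /andP[h1 h2]] := qseq_dense ye.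
  apply: (le_trans (ereal_inf_lbound _)); first by exists k => //; apply/hP.
  by rewrite -EFinD lee_fin ltW.
apply/ereal_infP => z [k Pk <-]; rewrite lee_fin; apply: ltW; exact/(hP k).1.
Qed.

Lemma inf_meas (R : realType) {T : Type} (U : set T) (M : set_system T)
  (E : nat -> set T) : sigma_algebra U M -> (forall k, M (E k)) ->
  meas_wrt U M (fun p => fine (ereal_inf [set (qseq R k)%:E | k in [set k | E k p]])).
Proof.
move=> hM hE0; have hM' := trace_sa hM.
set M' := [set A | M (U `&` A)] in hM'.
have hE : forall k, M' (E k) by move=> k; rewrite /M' /=; exact: (saIU hM).
set e := fun p => ereal_inf [set (qseq R k)%:E | k in [set k | E k p]].
set L := fun a : R => \bigcup_k (E k `&` [set _ | qseq R k < a]).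
have hL : forall a, M' (L a).
  move=> a; apply: (saU hM') => k; apply: (saI hM') => //; exact: const_set hM'.
have cL : forall p a, (e p < a%:E)%E <-> L a p.
  move=> p a; split.
    move=> /ereal_inf_lt [z [k Ek <-]]; rewrite lte_fin => h; by exists k.
  move=> [k _ [Ek /= h]]; apply: (le_lt_trans (ereal_inf_lbound _)).
    by exists k.
  by rewrite lte_fin.
set Ninf := \bigcap_m L (- m%:R).
have hN : M' Ninf.
  by rewrite -(setTI Ninf); apply: (saIn hM') => m; exact: hL.
have cN : forall p, e p = -oo%E <-> Ninf p.
  move=> p; split; first by move=> ep m _; apply/cL; rewrite ep ltNyr.
  move=> hp; case E1: (e p) => [r| |] //.
    have h1 := (cL p _).2 (hp (Num.Def.trunc `|r|).+1 I).
    rewrite E1 lte_fin in h1.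
    have h2 := truncnS_gt `|r|.
    have h3 : - r <= `|r| by rewrite -normrN ler_norm.
    exfalso; move: h1 h2 h3; move: (Num.Def.trunc `|r|).+1%:R => x.
    move: `|r| => z; lra.
  by have := (cL p _).2 (hp 0%N I); rewrite E1.
set Pinf := setT `\` \bigcup_k E k.
have hP : M' Pinf by apply: (saD hM'); apply: (saU hM').
have cP : forall p, e p = +oo%E <-> Pinf p.
  move=> p; split.
    move=> ep; split => // -[k _ Ek].
    have := ereal_inf_lbound (_ : [set (qseq R k)%:E | k in [set k | E k p]] (qseq R k)%:E).
    by rewrite -/(e p) ep leNgt ltry => /(_ (ex_intro2 _ _ k Ek erefl)).
  move=> [_ H]; rewrite /e (_ : [set _ | k in _] = set0) ?ereal_inf0 //.
  by apply/seteqP; split => z // [k Ek _]; apply: H; exists k.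
move=> B mB; rewrite -(setTI (_ @^-1` B)); apply: (rays_meas hM') mB => a.
rewrite setTI.
rewrite (_ : _ @^-1` _ = (L a `\` Ninf) `|` ([set _ | 0 < a] `&` (Ninf `|` Pinf))).
  apply: (saU2 hM').
    by apply: (saDs hM').
  by apply: (saI hM') => //; [exact: const_set hM'|exact: (saU2 hM')].
apply/seteqP; split => p; rewrite /preimage /= in_itv /= -/(e p).
  case E1: (e p) => [r| |] /= ra.
  - left; split; first by apply/cL; rewrite E1 lte_fin.
    by move=> /cN; rewrite E1.
  - by right; split => //; right; apply/cP.
  - by right; split => //; left; apply/cN.
case E1: (e p) => [r| |] /=.
- move=> [[/cL h _]|[_ [/cN h|/cP h]]]; move: h; rewrite -/(e p) E1 ?lte_fin //.
- by move=> [[/cL h _]|[]] //; move: h; rewrite -/(e p) E1.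
- by move=> [[_ /cN h]|[]] //; move: h; rewrite -/(e p) E1.
Qed.
Lemma small_inv (R : realType) (e : R) : 0 < e -> exists m : nat, (m.+1%:R)^-1 < e.
Proof.
move=> e0; exists (Num.Def.trunc e^-1).
by rewrite invf_plt ?posrE ?ltr0Sn //; apply: truncnS_gt.
Qed.

Section Model.
Context (R : realType) (d : measure_display)
  (Omega : measurableType d) (Q : probability Omega R)
  (F : R -> set_system Omega) (tau : Omega -> \bar R) (S : Omega -> \bar R)
  (hF_sigma : forall t : R, 0 <= t -> sigma_algebra setT (F t))
  (hF_meas : forall t : R, 0 <= t -> F t `<=` measurable)
  (hF_mono : forall s t : R, 0 <= s -> s <= t -> F s `<=` F t)
  (hF_rc : forall t : R, 0 <= t ->
     F t = \bigcap_(s in [set s : R | t < s]) F s)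
  (hF0 : negl_sys Q (sys_inf F) `<=` F 0)
  (htau_pos : forall w, (0 <= tau w)%E)
  (htau_meas : measurable_fun setT tau)
  (hS : stopping_time (Gfilt Q F tau) S).

Local Notation G := (Gfilt Q F tau).
Local Notation D := [set w | (S w < +oo)%E].

Lemma G_sa t : sigma_algebra setT (G t).
Proof. exact: smallest_sigma_algebra. Qed.

Lemma N_G t : Nsys Q F tau `<=` G t.
Proof. by move=> A hA; apply: sub_sigma_algebra; left. Qed.

Lemma F_G t : 0 <= t -> F t `<=` G t.
Proof.
move=> t0 A hA; apply: sub_sigma_algebra; right => s /= ts.
apply: sub_sigma_algebra; left; exact: (hF_mono t0 (ltW ts) hA).
Qed.

Lemma G_mono s t : s <= t -> G s `<=` G t.
Proof.
move=> st; apply: sub_sigma_algebra2 => A [hA|hA]; [by left|right].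
by move=> u /= tu; apply: hA => /=; apply: le_lt_trans tu.
Qed.

Lemma inf_sa (H : R -> set_system Omega) : sigma_algebra setT (sys_inf H).
Proof. exact: smallest_sigma_algebra. Qed.

Lemma H_inf (H : R -> set_system Omega) t : 0 <= t -> H t `<=` sys_inf H.
Proof. by move=> t0 A hA; apply: sub_sigma_algebra; exists t. Qed.

Lemma S_ge0 w : (0 <= S w)%E. Proof. by case: hS. Qed.

Lemma Sle t : 0 <= t -> G t [set w | (S w <= t%:E)%E].
Proof. by case: hS => _ h; apply: h. Qed.

Lemma Slt r t : 0 <= t ->
  G t ([set w | (S w < r%:E)%E] `&` [set w | (S w <= t%:E)%E]).
Proof.
move=> t0; have [tr|rt] := leP r t; last first.
  rewrite setIidr; first exact: Sle.
  by move=> w /= Sw; apply: le_lt_trans Sw _; rewrite lte_fin.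
rewrite setIidl; last by move=> w /= Sw; apply: (ltW (lt_le_trans Sw _)); rewrite lee_fin.
have -> : [set w | (S w < r%:E)%E] =
    \bigcup_m [set w | (S w <= (r - (m.+1%:R)^-1)%:E)%E].
  apply/seteqP; split => w /=.
    move=> Sr; have Sfin : S w \is a fin_num.
      by rewrite ge0_fin_numE ?S_ge0 // (lt_trans Sr) ?ltry.
    rewrite -(fineK Sfin) lte_fin in Sr.
    have hr : 0 < r - fine (S w) by rewrite subr_gt0.
    have [m hm] := @small_inv _ _ hr.
    exists m => //=; rewrite -(fineK Sfin) lee_fin lerBrDr addrC -lerBrDr.
    exact: ltW.
  move=> [m _ /=] h; apply: le_lt_trans h _; rewrite lte_fin.
  by rewrite ltrBlDr ltrDl invr_gt0 ltr0Sn.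
apply: (saU (G_sa t)) => m.
have [hm|hm] := leP 0 (r - (m.+1%:R)^-1).
  have hle : r - (m.+1%:R)^-1 <= t.
    by rewrite lerBlDr (le_trans tr) // lerDl invr_ge0 ler0n.
  exact: (G_mono hle (Sle hm)).
rewrite (_ : [set w | _] = set0); first exact: (sa0 (G_sa t)).
apply/seteqP; split => w //= h; have := le_trans (S_ge0 w) h.
by rewrite lee_fin leNgt hm.
Qed.

Lemma inf_sasT : sys_inf G setT.
Proof. exact: (saT (inf_sa G)). Qed.

Lemma sas_sa : sigma_algebra setT (sys_at_stop G S).
Proof.
split.
- split; first exact: (sa0 (inf_sa G)).
  by move=> t t0; rewrite set0I; exact: (sa0 (G_sa t)).
- move=> A [hA1 hA2]; split; first exact: (saD (inf_sa G)).
  move=> t t0; rewrite setTD.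
  have -> : ~` A `&` [set w | (S w <= t%:E)%E] =
     [set w | (S w <= t%:E)%E] `\` (A `&` [set w | (S w <= t%:E)%E]).
    by apply/seteqP; split => w /=; [move=> [nA Sw]; split => // -[]|move=> [Sw H]; split => // Aw; apply: H].
  apply: (saDs (G_sa t)) => //; [exact: Sle|exact: hA2].
- move=> A hA; split; first by apply: (saU (inf_sa G)) => n; case: (hA n).
  move=> t t0; rewrite setI_bigcupl; apply: (saU (G_sa t)) => n.
  by case: (hA n) => _; apply.
Qed.

Lemma sas_intro W :
  (forall t, 0 <= t -> G t (W `&` [set w | (S w <= t%:E)%E])) ->
  sys_inf G (W `&` [set w | S w = +oo%E]) -> sys_at_stop G S W.
Proof.
move=> h1 h2; split => //.
have -> : W = (\bigcup_n (W `&` [set w | (S w <= n%:R%:E)%E])) `|`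
              (W `&` [set w | S w = +oo%E]).
  apply/seteqP; split => w; last by move=> [[n _ []]|[]].
  move=> Ww; have [Sy|Sy] := eqVneq (S w) +oo%E; first by right.
  left; have Sfin : S w \is a fin_num by rewrite ge0_fin_numE ?S_ge0 // ltey.
  exists (Num.Def.trunc (fine (S w))).+1 => //; split => //=.
  rewrite -(fineK Sfin) lee_fin; apply: ltW; exact: truncnS_gt.
apply: (saU2 (inf_sa G)) => //; apply: (saU (inf_sa G)) => n.
exact: (H_inf (ler0n _ _) (h1 _ (ler0n _ _))).
Qed.

Lemma Soo_inf : sys_inf G [set w | S w = +oo%E].
Proof.
have -> : [set w | S w = +oo%E] = setT `\` \bigcup_n [set w | (S w <= n%:R%:E)%E].
  apply/seteqP; split => w /=.
    by move=> Sw; split => // -[n _ /=]; rewrite Sw leNgt ltry.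
  move=> [_ H]; apply: contrapT => Sy; apply: H.
  have Sfin : S w \is a fin_num by rewrite ge0_fin_numE ?S_ge0 // ltey; apply/eqP.
  exists (Num.Def.trunc (fine (S w))).+1 => //=.
  rewrite -(fineK Sfin) lee_fin; apply: ltW; exact: truncnS_gt.
apply: (saD (inf_sa G)); apply: (saU (inf_sa G)) => n.
exact: (H_inf (ler0n _ _) (Sle (ler0n _ _))).
Qed.


Lemma S_fin w t : (S w <= t%:E)%E -> S w \is a fin_num.
Proof. by move=> h; rewrite ge0_fin_numE ?S_ge0 // (le_lt_trans h) ?ltry. Qed.

Definition uapp (t : R) (n : nat) (w : Omega) : R :=
  Num.min ((n.+1%:R)^-1 * (Num.Def.trunc (n.+1%:R * fine (S w))).+1%:R) t.

Lemma uapp_bounds t n w : (S w <= t%:E)%E ->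
  fine (S w) <= uapp t n w /\ uapp t n w <= fine (S w) + (n.+1%:R)^-1.
Proof.
move=> St; have Sf := S_fin St.
have s0 : 0 <= fine (S w) by rewrite fine_ge0 ?S_ge0.
have st : fine (S w) <= t by rewrite -lee_fin fineK.
have := grid_trunc n (Num.Def.trunc (n.+1%:R * fine (S w))) s0.
rewrite eqxx => /andP[h1 h2]; split.
  by rewrite /uapp le_min (ltW h2) st.
rewrite /uapp ge_min; apply/orP; left.
set j := Num.Def.trunc _; rewrite -(natr1 j) mulrDr mulr1 lerD2r.
by move: h1; rewrite -/j.
Qed.

Lemma X_conv (X : R * Omega -> R) w t : cadlag X -> (S w <= t%:E)%E ->
  forall e, 0 < e -> exists N, forall n, (N <= n)%N ->
    `|X (fine (S w), w) - X (uapp t n w, w)| < e.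
Proof.
move=> cX St e e0; have Sf := S_fin St.
have s0 : 0 <= fine (S w) by rewrite fine_ge0 ?S_ge0.
have [del del0 hd] := rc_ball ((cX w).1 _ s0) e0.
have [N hN] := @small_inv _ _ del0.
exists N => n Nn; have [u1 u2] := uapp_bounds n St.
have [ue|ue] := eqVneq (uapp t n w) (fine (S w)).
  by rewrite ue subrr normr0.
apply: hd; first by rewrite lt_neqAle eq_sym ue u1.
apply: (le_lt_trans u2); rewrite ltrD2l; apply: le_lt_trans hN.
exact: inv_le.
Qed.

Lemma lt_ray (X : R * Omega -> R) (r b : R) :
  [set w | X (r, w) < b] = (fun w => X (r, w)) @^-1` `]-oo, b[.
Proof. by apply/seteqP; split => w /=; rewrite in_itv /=. Qed.

Lemma stop_lt (X : R * Omega -> R) : cadlag X -> adapted G X -> forall a,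
  sys_at_stop G S (D `&` [set w | X (fine (S w), w) < a]).
Proof.
move=> cX aX a; apply: sas_intro; last first.
  rewrite (_ : _ `&` _ = set0); first exact: (sa0 (inf_sa G)).
  apply/seteqP; split => w // [[/= Sw _] Sy]; by rewrite Sy ltxx in Sw.
move=> t t0.
set V := [set w | (S w <= t%:E)%E].
have hP : forall n b, G t (V `&` [set w | X (uapp t n w, w) < b]).
  move=> n b.
  have -> : V `&` [set w | X (uapp t n w, w) < b] = \bigcup_j (
     ((V `\` ([set w | (S w < ((n.+1%:R)^-1 * j%:R)%:E)%E] `&` V)) `&`
      ([set w | (S w < ((n.+1%:R)^-1 * j.+1%:R)%:E)%E] `&` V)) `&`
      [set w | X (Num.min ((n.+1%:R)^-1 * j.+1%:R) t, w) < b]).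
    apply/seteqP; split=> w.
      move=> [Vw hX]; exists (Num.Def.trunc (n.+1%:R * fine (S w))) => //.
      have Sf := S_fin Vw.
      have s0 : 0 <= fine (S w) by rewrite fine_ge0 ?S_ge0.
      have := grid_trunc n (Num.Def.trunc (n.+1%:R * fine (S w))) s0.
      rewrite eqxx => /andP[h1 h2]; split => //; split.
        split => // -[] /=; rewrite -(fineK Sf) lte_fin => h _.
        by move: h1; rewrite leNgt h.
      by split => //=; rewrite -(fineK Sf) lte_fin.
    move=> [j _ [[[Vw h1] [h2 _]] h3]]; split => //.
    have Sf := S_fin Vw.
    have s0 : 0 <= fine (S w) by rewrite fine_ge0 ?S_ge0.
    have e1 : (n.+1%:R)^-1 * j%:R <= fine (S w).
      rewrite leNgt; apply/negP => h; apply: h1; split => //.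
      by rewrite /= -(fineK Sf) lte_fin.
    have e2 : fine (S w) < (n.+1%:R)^-1 * j.+1%:R by rewrite -lte_fin fineK.
    have := grid_trunc n j s0; rewrite e1 e2 /= => /esym/eqP ej.
    by rewrite /= /uapp ej.
  apply: (saU (G_sa t)) => j; apply: (saI (G_sa t)) => //.
    apply: (saI (G_sa t)) => //.
      apply: (saDs (G_sa t)) => //; first exact: Sle.
      exact: Slt.
    exact: Slt.
  have m0 : 0 <= Num.min ((n.+1%:R)^-1 * j.+1%:R) t.
    by rewrite le_min t0 mulr_ge0 // invr_ge0 ler0n.
  have hmt : Num.min ((n.+1%:R)^-1 * j.+1%:R) t <= t by rewrite ge_min lexx orbT.
  apply: (G_mono hmt).
  rewrite lt_ray; apply: aX => //; exact: measurable_itv.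
have eqA : (D `&` [set w | X (fine (S w), w) < a]) `&` V =
    \bigcup_k \bigcup_N (setT `&` \bigcap_n
      (V `&` [set w | X (uapp t (n + N) w, w) < a - (k.+1%:R)^-1])).
  apply/seteqP; split => w.
    move=> [[_ /= hX] Vw].
    have e0 : 0 < (a - X (fine (S w), w)) / 2 by rewrite divr_gt0 // subr_gt0.
    have [k hk] := @small_inv _ _ e0.
    have [N hN] := X_conv cX Vw e0.
    exists k => //; exists N => //; split => // n _; split => //=.
    have := hN (n + N)%N (leq_addl _ _); rewrite ltr_norml => /andP[l1 l2].
    move: l1 hk; set x := X (fine _, _); set y := X (uapp _ _ _, _).
    set i := (k.+1%:R)^-1; move=> l1 hk; lra.
  move=> [k _ [N _ [_ hI]]].
  have Vw : V w by case: (hI 0%N I).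
  split => //; split; first by rewrite /= (le_lt_trans Vw) ?ltry.
  rewrite /= ltNge; apply/negP => hs.
  have ik : 0 < (k.+1%:R)^-1 :> R by rewrite invr_gt0 ltr0Sn.
  have [N' hN'] := X_conv cX Vw ik.
  have := hN' (N' + N)%N (leq_addr _ _); rewrite ltr_norml => /andP[l1 l2].
  have [_ /= l3] := hI N' I.
  move: l1 l2 l3 hs; set x := X (fine _, _); set y := X (uapp _ _ _, _).
  set i := (k.+1%:R)^-1; move=> l1 l2 l3 hs; lra.
rewrite eqA; apply: (saU (G_sa t)) => k; apply: (saU (G_sa t)) => N.
by apply: (saIn (G_sa t)) => n; exact: hP.
Qed.

Lemma D_sas : sys_at_stop G S D.
Proof.
apply: sas_intro.
  move=> t t0; rewrite setIidr; first exact: Sle.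
  by move=> w /= h; rewrite (le_lt_trans h) ?ltry.
rewrite (_ : _ `&` _ = set0); first exact: (sa0 (inf_sa G)).
by apply/seteqP; split => w // [/= Sw Sy]; rewrite Sy ltxx in Sw.
Qed.

Lemma sasD : sigma_algebra D (sys_at_stop G S).
Proof. exact: (sa_restr sas_sa D_sas). Qed.

Lemma stop_B (X : R * Omega -> R) : cadlag X -> adapted G X ->
  forall B, measurable B ->
  sys_at_stop G S (D `&` [set w | B (X (fine (S w), w))]).
Proof.
move=> cX aX B mB.
have hr : forall a, sys_at_stop G S
    (D `&` (fun w => X (fine (S w), w)) @^-1` `]-oo, a[).
  move=> a; rewrite (_ : _ @^-1` _ = [set w | X (fine (S w), w) < a]).
    exact: stop_lt.
  by apply/seteqP; split => w /=; rewrite in_itv.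
exact: (rays_meas sasD hr mB).
Qed.

Lemma fineS_ge0 w : 0 <= fine (S w).
Proof. by rewrite fine_ge0 ?S_ge0. Qed.

Lemma opt_stop E : optional G E ->
  sys_at_stop G S (D `&` [set w | E (fine (S w), w)]).
Proof.
move=> hE.
have H : optional G `<=` [set E | sys_at_stop G S (D `&` [set w | E (fine (S w), w)])].
  2: exact: H.
apply: smallest_sub.
  split.
  - rewrite /= (_ : _ `&` _ = set0); first exact: (sa0 sas_sa).
    by apply/seteqP; split => w // [].
  - move=> A /= hA.
    have -> : D `&` [set w | (Dom `\` A) (fine (S w), w)] =
        D `\` (D `&` [set w | A (fine (S w), w)]).
      apply/seteqP; split => w /=.
        by move=> [Dw [_ nA]]; split => // -[].
      by move=> [Dw H]; split => //; split; [exact: fineS_ge0|move=> Aw; apply: H].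
    by apply: (saDs sas_sa) => //; exact: D_sas.
  - move=> A /= hA; rewrite (_ : _ `&` _ = \bigcup_n (D `&` [set w | A n (fine (S w), w)])).
      exact: (saU sas_sa).
    apply/seteqP; split => w /=.
      by move=> [Dw [n _ An]]; exists n.
    by move=> [n _ [Dw An]]; split => //; exists n.
move=> A [X [B [cX [aX [mB ->]]]]] /=.
rewrite (_ : _ `&` _ = D `&` [set w | B (X (fine (S w), w))]); first exact: (stop_B cX aX mB).
apply/seteqP; split => w /=; first by move=> [Dw [_ h]].
by move=> [Dw h]; split => //; split => //; exact: fineS_ge0.
Qed.

Lemma optY (Y : R * Omega -> R) : meas_wrt Dom (optional G) Y ->
  forall B, measurable B ->
  sys_at_stop G S (D `&` [set w | B (Y (fine (S w), w))]).
Proof.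
move=> mY B mB; have := opt_stop (mY B mB).
rewrite (_ : _ `&` _ = D `&` [set w | B (Y (fine (S w), w))]) //.
apply/seteqP; split => w /=; first by move=> [Dw [_ h]].
by move=> [Dw h]; split => //; split => //; exact: fineS_ge0.
Qed.

Lemma optF_G : optional F `<=` optional G.
Proof.
apply: sub_sigma_algebra2 => A [X [B [cX [aX [mB ->]]]]].
exists X, B; split => //; split => // t t0 B' mB'.
exact: (F_G t0 (aX t t0 B' mB')).
Qed.

Lemma N_sas : Nsys Q F tau `<=` sys_at_stop G S.
Proof.
move=> A hA; split; first exact: (H_inf (lexx 0) (N_G hA)).
move=> t t0; apply: (saI (G_sa t)) => //; [exact: N_G|exact: Sle].
Qed.

Lemma tau_set (B : set (\bar R)) t : measurable B -> 0 <= t ->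
  G t ([set w | B (tau w)] `&` [set w | (tau w <= t%:E)%E]).
Proof.
move=> mB t0; apply: sub_sigma_algebra; right => s /= ts.
apply: sub_sigma_algebra; right; apply: sub_sigma_algebra.
exists (B `&` `]-oo, t%:E]).
  by apply: measurableI => //; exact: emeasurable_itv.
apply/seteqP; split => w /=; rewrite in_itv /=; have [h|h] := leP (tau w) s%:E.
- by [].
- move=> -[_ st]; exfalso.
  by move: st; rewrite lee_fin leNgt ts.
- by [].
- move=> [Bw tw]; exfalso; have := lt_le_trans h tw.
  by rewrite lte_fin ltNge (ltW ts).
Qed.


Lemma K_set t : 0 <= t ->
  G t ([set w | (tau w <= S w)%E] `&` [set w | (S w <= t%:E)%E]).
Proof.
move=> t0; set V := [set w | (S w <= t%:E)%E].
have -> : [set w | (tau w <= S w)%E] `&` V = setT `&` \bigcap_m \bigcup_i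
   (([set w | `]-oo, ((m.+1%:R)^-1 * i.+1%:R)%:E[%classic (tau w)] `&`
     [set w | (tau w <= t%:E)%E]) `&`
    (V `\` ([set w | (S w < ((m.+1%:R)^-1 * i%:R)%:E)%E] `&` V))).
  apply/seteqP; split => w.
    move=> [tS Vw]; have Sf := S_fin Vw.
    have s0 : 0 <= fine (S w) by rewrite fine_ge0 ?S_ge0.
    split => // m _; exists (Num.Def.trunc (m.+1%:R * fine (S w))) => //.
    have := grid_trunc m (Num.Def.trunc (m.+1%:R * fine (S w))) s0.
    rewrite eqxx => /andP[h1 h2]; split; split => //=.
    - rewrite in_itv /=; apply: le_lt_trans tS _.
      by rewrite -(fineK Sf) lte_fin.
    - exact: le_trans tS Vw.
    - move=> [] /=; rewrite -(fineK Sf) lte_fin => h _.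
      by move: h1; rewrite leNgt h.
  move=> [_ hI].
  have [i _ [[_ /= tt] [Vw _]]] := hI 0%N I.
  split => //; rewrite leNgt; apply/negP => Stau.
  have Sf := S_fin Vw.
  have tf : tau w \is a fin_num.
    by rewrite ge0_fin_numE ?htau_pos // (le_lt_trans tt) ?ltry.
  have g0 : 0 < fine (tau w) - fine (S w).
    by rewrite subr_gt0 -lte_fin !fineK.
  have [m hm] := @small_inv _ _ g0.
  have [j _ [[/= h1 _] [_ h2]]] := hI m I.
  move: h1; rewrite in_itv /= -(fineK tf) lte_fin => h1.
  have h3 : (m.+1%:R)^-1 * j%:R <= fine (S w).
    rewrite leNgt; apply/negP => h; apply: h2; split => //=.
    by rewrite -(fineK Sf) lte_fin.
  move: h1; rewrite -(natr1 j) mulrDr mulr1 => h1.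
  move: h1 h3 hm; set a := (m.+1%:R)^-1 * j%:R; set b := (m.+1%:R)^-1.
  move=> h1 h3 hm; lra.
apply: (saIn (G_sa t)) => m; apply: (saU (G_sa t)) => i.
apply: (saI (G_sa t)) => //.
  apply: tau_set => //; exact: emeasurable_itv.
apply: (saDs (G_sa t)) => //; first exact: Sle.
exact: Slt.
Qed.

Lemma tau_inf (B : set (\bar R)) : measurable B ->
  sys_inf G [set w | B (tau w)].
Proof.
move=> mB.
have -> : [set w | B (tau w)] =
  (\bigcup_n ([set w | B (tau w)] `&` [set w | (tau w <= n%:R%:E)%E])) `|`
  ([set _ | B +oo%E] `&` (setT `\` \bigcup_n ([set w | setT (tau w)] `&`
      [set w | (tau w <= n%:R%:E)%E]))).
  apply/seteqP; split => w.
    move=> Bw; have [ty|ty] := eqVneq (tau w) +oo%E.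
      right; split; first by rewrite /= -ty.
      by split => // -[n _ [_ /=]]; rewrite ty leNgt ltry.
    have tf : tau w \is a fin_num by rewrite ge0_fin_numE ?htau_pos // ltey.
    left; exists (Num.Def.trunc (fine (tau w))).+1 => //; split => //=.
    rewrite -(fineK tf) lee_fin; apply: ltW; exact: truncnS_gt.
  move=> [[n _ []]//|[/= By [_ H]]].
  have [ty|ty] := eqVneq (tau w) +oo%E; first by rewrite ty.
  exfalso; apply: H.
  have tf : tau w \is a fin_num by rewrite ge0_fin_numE ?htau_pos // ltey.
  exists (Num.Def.trunc (fine (tau w))).+1 => //; split => //=.
  rewrite -(fineK tf) lee_fin; apply: ltW; exact: truncnS_gt.
apply: (saU2 (inf_sa G)).
  apply: (saU (inf_sa G)) => n; apply: (H_inf (ler0n _ _)).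
  exact: tau_set (ler0n _ _).
apply: (saI (inf_sa G)) => //; first exact: const_set (inf_sa G).
apply: (saD (inf_sa G)); apply: (saU (inf_sa G)) => n.
apply: (H_inf (ler0n _ _)); exact: tau_set (ler0n _ _).
Qed.

Lemma nmid_sas (B : set (\bar R)) : measurable B ->
  sys_at_stop G S [set w | B (tau_nmid tau S w)].
Proof.
move=> mB; apply: sas_intro.
  move=> t t0; set V := [set w | (S w <= t%:E)%E].
  set K := [set w | (tau w <= S w)%E] `&` V.
  have -> : [set w | B (tau_nmid tau S w)] `&` V =
     (K `&` ([set w | B (tau w)] `&` [set w | (tau w <= t%:E)%E])) `|`
     ((V `\` K) `&` [set _ | B +oo%E]).
    apply/seteqP; split => w; rewrite /tau_nmid /=.
      case: ifPn => h [Bw Vw].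
        by left; split; split => //; apply: le_trans h Vw.
      by right; split => //; split => // -[h' _]; move: h; rewrite h'.
    move=> [[[tS Vw] [Bw _]]|[[Vw nK] By]].
      by rewrite tS.
    case: ifPn => h //; exfalso; apply: nK; split => //.
  apply: (saU2 (G_sa t)).
    apply: (saI (G_sa t)) => //; first exact: K_set.
    exact: tau_set.
  apply: (saI (G_sa t)) => //; last exact: const_set (G_sa t).
  apply: (saDs (G_sa t)) => //; first exact: Sle.
  exact: K_set.
rewrite (_ : _ `&` _ = [set w | B (tau w)] `&` [set w | S w = +oo%E]).
  apply: (saI (inf_sa G)) => //; [exact: tau_inf|exact: Soo_inf].
apply/seteqP; split => w [Bw Sy]; split => //; move: Bw;
  by rewrite /tau_nmid /= Sy leey.
Qed.

Lemma Soo_sas : sys_at_stop G S [set w | S w = +oo%E].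
Proof.
apply: sas_intro; last by rewrite setIid; exact: Soo_inf.
move=> t t0; rewrite (_ : _ `&` _ = set0); first exact: (sa0 (G_sa t)).
by apply/seteqP; split => w // [/= ->]; rewrite leNgt ltry.
Qed.

Lemma Fat_sas : F_at F S `<=` sys_at_stop G S.
Proof.
apply: smallest_sub; first exact: sas_sa.
move=> E [f [B [[X [mX ->]] [mB ->]]]].
have mXG : meas_wrt Dom (optional G) X.
  by move=> B' mB'; apply: optF_G; exact: mX.
rewrite (_ : _ @^-1` _ = (D `&` [set w | B (X (fine (S w), w))]) `|`
   ([set w | S w = +oo%E] `&` [set _ | B 0])).
  apply: (saU2 sas_sa); first exact: (optY mXG mB).
  apply: (saI sas_sa) => //; [exact: Soo_sas|exact: const_set sas_sa].
apply/seteqP; split => w; rewrite /preimage /=.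
  have [Sy|Sy] := ltP (S w) +oo%E; first by left.
  by right; split => //; move: Sy; rewrite leye_eq => /eqP.
move=> [[Dw Bw]|[Sy B0]]; first by rewrite Dw.
by rewrite Sy ltxx.
Qed.

Lemma RHS_sas :
  sjoin (sjoin (Nsys Q F tau) (sigma_rv (tau_nmid tau S))) (F_at F S)
  `<=` sys_at_stop G S.
Proof.
apply: smallest_sub; first exact: sas_sa.
move=> A [hA|hA]; last exact: Fat_sas.
move: A hA; apply: smallest_sub; first exact: sas_sa.
move=> A [hA|hA]; first exact: N_sas.
move: A hA; apply: smallest_sub; first exact: sas_sa.
by move=> A [B mB <-]; exact: nmid_sas.
Qed.


Definition thr (A : set Omega) (c : R) : R * Omega -> R :=
  fun p => if `[< A p.2 >] && (S p.2 + c%:E <= p.1%:E)%E then 1 else 0.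

Lemma thr_cadlag A c : cadlag (thr A c).
Proof.
move=> w; case: (pselect (A w)) => Aw.
  have e : (fun s => thr A c (s, w)) =
      (fun s : R => if (S w + c%:E <= s%:E)%E then 1 else 0).
    by apply/funext => s; rewrite /thr /= asboolT.
  split => t t0; rewrite e.
    by rewrite /thr /= asboolT //; exact: step_rc.
  exact: step_ll.
have e : (fun s => thr A c (s, w)) = (fun s : R => 0).
  by apply/funext => s; rewrite /thr /= asboolF.
split => t t0; rewrite e.
  by rewrite /thr /= asboolF //; exact: cvg_cst.
by exists 0; exact: cvg_cst.
Qed.

Lemma shift_G A c t : 0 <= c -> 0 <= t -> sys_at_stop G S A ->
  G t (A `&` [set w | (S w + c%:E <= t%:E)%E]).
Proof.
move=> c0 t0 [_ hA]; have [tc|tc] := leP 0 (t - c).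
  rewrite (_ : [set w | _] = [set w | (S w <= (t - c)%:E)%E]).
    have hle : t - c <= t by rewrite lerBlDr lerDl.
    exact: (G_mono hle (hA _ tc)).
  apply/seteqP; split => w /=; case E1: (S w) => [s| |] //=.
  - by move=> h; rewrite lee_fin lerBrDr -lee_fin; exact: h.
  - by have := S_ge0 w; rewrite E1.
  - by rewrite lee_fin lerBrDr -lee_fin.
  - by have := S_ge0 w; rewrite E1.
rewrite (_ : _ `&` _ = set0); first exact: (sa0 (G_sa t)).
apply/seteqP; split => w // [_ /=]; have := S_ge0 w.
case: (S w) => [s| |] //= s0; rewrite ?lee_fin => h.
have : s + c <= t by move: h; rewrite -lee_fin.
move: tc s0; rewrite lee_fin; lra.
Qed.

Lemma thr_adapted A c : 0 <= c -> sys_at_stop G S A -> adapted G (thr A c).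
Proof.
move=> c0 hA t t0 B mB.
set P := A `&` [set w | (S w + c%:E <= t%:E)%E].
rewrite (_ : _ @^-1` _ = (P `&` [set _ | B 1]) `|` (~` P `&` [set _ | B 0])).
  apply: (saU2 (G_sa t)); apply: (saI (G_sa t)) => //; try exact: const_set (G_sa t).
    exact: shift_G.
  rewrite -setTD; apply: (saD (G_sa t)); exact: shift_G.
apply/seteqP; split => w; rewrite /preimage /thr /=.
  case: (pselect (A w)) => Aw; [rewrite asboolT //|rewrite asboolF //].
    rewrite /=; case: ifPn => h Bw; first by left.
    by right; split => // -[_ h']; move: h; rewrite h'.
  by move=> Bw; right; split => // -[].
move=> [[[Aw h] B1]|[nP B0]]; first by rewrite asboolT // h.
case: (pselect (A w)) => Aw; [rewrite asboolT //|by rewrite asboolF].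
by case: ifPn => // h; exfalso; apply: nP.
Qed.

Lemma opt_gen (X : R * Omega -> R) (B : set R) : cadlag X -> adapted G X ->
  measurable B -> optional G (Dom `&` X @^-1` B).
Proof. by move=> cX aX mB; apply: sub_sigma_algebra; exists X, B. Qed.

Lemma EA_opt A : sys_at_stop G S A -> optional G (graph S `&` [set p | A p.2]).
Proof.
move=> hA; have hO : sigma_algebra Dom (optional G) := smallest_sigma_algebra _ _.
rewrite (_ : _ `&` _ = (Dom `&` thr A 0 @^-1` [set 1]) `\`
    \bigcup_m (Dom `&` thr A (m.+1%:R)^-1 @^-1` [set 1])).
  apply: (saDs hO) => //.
  - exact: opt_gen (thr_cadlag _ _) (thr_adapted (lexx 0) hA) (measurable_set1 _).
  - apply: (saU hO) => m; apply: opt_gen (thr_cadlag _ _) _ (measurable_set1 _).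
    by apply: thr_adapted => //; rewrite invr_ge0 ler0n.
apply/seteqP; split => -[t w] /=.
  move=> [[t0 tS] Aw]; split.
    by split => //; rewrite /preimage /thr /= asboolT //= adde0 tS lexx.
  move=> [m _ [_]]; rewrite /preimage /thr /= asboolT //= -tS -EFinD lee_fin.
  case: ifPn => [h _|_]; last by move=> /eqP; rewrite eq_sym oner_eq0.
  by move: h; rewrite gerDl leNgt invr_gt0 ltr0Sn.
move=> [[t0]]; rewrite /preimage /thr /=.
case: (pselect (A w)) => Aw; last by rewrite asboolF //= => /eqP; rewrite eq_sym oner_eq0.
rewrite asboolT //= adde0; case: ifPn => [St _ H|_]; last first.
  by move=> /eqP; rewrite eq_sym oner_eq0.
split => //; split => //; apply/eqP; rewrite eq_le St andbT leNgt.
apply/negP => Slt.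
have Sf : S w \is a fin_num.
  by rewrite ge0_fin_numE ?S_ge0 // (lt_trans Slt) ?ltry.
have g0 : 0 < t - fine (S w) by rewrite subr_gt0 -lte_fin fineK.
have [m hm] := small_inv g0.
apply: H; exists m => //; split => //=; rewrite /preimage /thr /= asboolT //=.
rewrite -(fineK Sf) -EFinD lee_fin ifT //.
by move: hm; rewrite ltrBrDr addrC => /ltW.
Qed.

Lemma graph_opt : optional G (graph S).
Proof.
rewrite (_ : graph S = graph S `&` [set p | setT p.2]).
  by apply: EA_opt; exact: (saT sas_sa).
by apply/seteqP; split => p //; move=> [].
Qed.


Local Notation RHS :=
  (sjoin (sjoin (Nsys Q F tau) (sigma_rv (tau_nmid tau S))) (F_at F S)).

Lemma RHS_sa : sigma_algebra setT RHS.
Proof. exact: smallest_sigma_algebra. Qed.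

Lemma N_RHS : Nsys Q F tau `<=` RHS.
Proof. by move=> A hA; apply: sub_sigma_algebra; left; apply: sub_sigma_algebra; left. Qed.

Lemma nmid_RHS B : measurable B -> RHS [set w | B (tau_nmid tau S w)].
Proof.
move=> mB; apply: sub_sigma_algebra; left; apply: sub_sigma_algebra; right.
by apply: sub_sigma_algebra; exists B.
Qed.

Lemma Fat_RHS (X : R * Omega -> R) (B : set R) :
  meas_wrt Dom (optional F) X -> measurable B ->
  RHS ((fun w => if (S w < +oo)%E then X (fine (S w), w) else 0) @^-1` B).
Proof.
move=> mX mB; apply: sub_sigma_algebra; right; apply: sub_sigma_algebra.
exists (fun w => if (S w < +oo)%E then X (fine (S w), w) else 0), B.
by split; [exists X|].
Qed.

Lemma cst_meas : meas_wrt Dom (optional F) (fun _ => (1 : R)).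
Proof.
have hO : sigma_algebra Dom (optional F) := smallest_sigma_algebra _ _.
move=> B mB; case: (pselect (B 1)) => h.
  rewrite (_ : _ @^-1` _ = setT) ?setIT; first exact: (saT hO).
  by apply/seteqP; split.
rewrite (_ : _ @^-1` _ = set0) ?setI0; first exact: (sa0 hO).
by apply/seteqP; split.
Qed.

Lemma D_RHS : RHS D.
Proof.
have := Fat_RHS cst_meas (measurable_set1 1).
rewrite (_ : _ @^-1` _ = D) //; apply/seteqP; split => w /=.
  by case: ifPn => // _ /eqP; rewrite eq_sym oner_eq0.
by move=> ->.
Qed.

Lemma FatD_RHS (X : R * Omega -> R) (B : set R) :
  meas_wrt Dom (optional F) X -> measurable B ->
  RHS (D `&` [set w | B (X (fine (S w), w))]).
Proof.
move=> mX mB.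
rewrite (_ : _ `&` _ = D `&` (fun w => if (S w < +oo)%E then X (fine (S w), w) else 0) @^-1` B).
  by apply: (saI RHS_sa) => //; [exact: D_RHS|exact: Fat_RHS].
by apply/seteqP; split => w [Dw h]; split => //; move: h; rewrite /preimage /= Dw.
Qed.

Lemma nmid_le w : (tau w <= S w)%E -> tau_nmid tau S w = tau w.
Proof. by rewrite /tau_nmid => ->. Qed.

Lemma nmid_gt w : ~ (tau w <= S w)%E -> tau_nmid tau S w = +oo%E.
Proof. by rewrite /tau_nmid => /negP/negbTE ->. Qed.

Lemma nmid_fin w : D w -> ((tau_nmid tau S w < +oo)%E <-> (tau w <= S w)%E).
Proof.
move=> Dw; split.
  by rewrite /tau_nmid; case: ifPn => //; rewrite ltxx.
by move=> h; rewrite nmid_le // (le_lt_trans h).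
Qed.

Lemma mlty : measurable [set x : \bar R | (x < +oo)%E].
Proof.
rewrite (_ : [set x : \bar R | (x < +oo)%E] = ~` [set +oo%E]); first by apply: measurableC; exact: emeasurable_set1.
by apply/seteqP; split => x /=; rewrite ltey => /eqP.
Qed.

Lemma prod_rep E : prod_sys (optional F) E ->
  RHS [set w | (S w < +oo)%E /\ (tau w <= S w)%E /\ E (tau w, (fine (S w), w))].
Proof.
move=> hE.
have H : prod_sys (optional F) `<=` [set E | RHS [set w | (S w < +oo)%E /\ (tau w <= S w)%E /\ E (tau w, (fine (S w), w))]].
  2: exact: (H E hE).
apply: smallest_sub.
  split.
  - rewrite /= (_ : [set w | _] = set0); first exact: (sa0 RHS_sa).
    by apply/seteqP; split => w // [_ [_ []]].
  - move=> A /= hA.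
    have -> : [set w | (S w < +oo)%E /\ (tau w <= S w)%E /\ (Dom2 `\` A) (tau w, (fine (S w), w))] =
      (D `&` [set w | (tau_nmid tau S w < +oo)%E]) `\`
        [set w | (S w < +oo)%E /\ (tau w <= S w)%E /\ A (tau w, (fine (S w), w))].
      apply/seteqP; split => w /=.
        move=> [Dw [tS [_ nA]]]; split; first by split => //; apply/nmid_fin.
        by move=> [_ [_ Aw]].
      move=> [[Dw hn] H]; have tS := (nmid_fin Dw).1 hn.
      split => //; split => //; split; first by split => /=; [exact: htau_pos|exact: fineS_ge0].
      by move=> Aw; apply: H.
    apply: (saDs RHS_sa) => //; apply: (saI RHS_sa) => //; first exact: D_RHS.
    exact: nmid_RHS mlty.
  - move=> A /= hA; rewrite (_ : [set w | _] = \bigcup_n [set w | (S w < +oo)%E /\ (tau w <= S w)%E /\ A n (tau w, (fine (S w), w))]).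
      exact: (saU RHS_sa).
    apply/seteqP; split => w /=.
      by move=> [Dw [tS [n _ An]]]; exists n.
    by move=> [n _ [Dw [tS An]]]; split => //; split => //; exists n.
move=> A [A0 [B [mA0 [A0pos [hB ->]]]]] /=.
have mB : meas_wrt Dom (optional F) (fun p => if `[< B p >] then 1 else 0 : R).
  exact: ind_meas (smallest_sigma_algebra _ _) hB.
rewrite (_ : [set w | _] = [set w | (A0 `&` [set x | (x < +oo)%E]) (tau_nmid tau S w)] `&`
    (D `&` [set w | [set 1] ((fun p => if `[< B p >] then 1 else 0 : R) (fine (S w), w))])).
  apply: (saI RHS_sa) => //; last exact: FatD_RHS mB (measurable_set1 _).
  by apply: nmid_RHS; apply: measurableI => //; exact: mlty.
apply/seteqP; split => w /=.
  move=> [Dw [tS [A0w Bw]]]; rewrite nmid_le //; split; first by split => //; apply: le_lt_trans tS Dw.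
  by split => //; rewrite asboolT.
move=> [[hA hy] [Dw hB1]]; have tS := (nmid_fin Dw).1 hy.
move: hA; rewrite nmid_le // => hA; split => //; split => //; split => //.
by case: (pselect (B (fine (S w), w))) => // nB; move: hB1; rewrite asboolF // => /eqP; rewrite eq_sym oner_eq0.
Qed.


Lemma negl_N (B E : set Omega) : sigma_tau_Finf F tau B -> Q B = 0%E ->
  E `<=` B -> Nsys Q F tau E.
Proof. by move=> hB QB EB; apply: sub_sigma_algebra; exists B. Qed.

Lemma fwd : Lo Q F tau (graph S) -> forall A, sys_at_stop G S A ->
  exists2 C, RHS C & D `&` A = D `&` C.
Proof.
move=> [_ [_ hsplit]] A hA.
set EA := graph S `&` [set p | A p.2].
set Y := fun p => if `[< EA p >] then 1 else 0 : R.
have mY : meas_wrt Dom (optional G) Y.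
  exact: ind_meas (smallest_sigma_algebra _ _) (EA_opt hA).
have [Y' [Y'' [mY' [mY'' [B0 [hB0 [QB0 Ex]]]]]]] := hsplit Y mY.
set f' := fun w => if (S w < +oo)%E then Y' (fine (S w), w) else 0.
set C1 := [set w | tau_nmid tau S w = +oo%E] `&` (f' @^-1` [set 1]).
set C2 := [set w | (S w < +oo)%E /\ (tau w <= S w)%E /\
   (Dom2 `&` Y'' @^-1` [set 1]) (tau w, (fine (S w), w))].
exists (((C1 `|` C2) `&` ~` B0) `|` (A `&` B0)).
  apply: (saU2 RHS_sa).
    apply: (saI RHS_sa) => //.
      apply: (saU2 RHS_sa).
        apply: (saI RHS_sa) => //; first exact: nmid_RHS (emeasurable_set1 _).
        exact: Fat_RHS mY' (measurable_set1 _).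
      exact: prod_rep (mY'' _ (measurable_set1 1)).
    rewrite -setTD; apply: (saD RHS_sa); apply: N_RHS.
    exact: negl_N hB0 QB0 (@subset_refl _ B0).
  by apply: N_RHS; apply: negl_N hB0 QB0 _; apply: subIsetr.
have Sf : forall w, D w -> S w \is a fin_num.
  by move=> w Dw; rewrite ge0_fin_numE ?S_ge0.
have hY : forall w, D w -> Y (fine (S w), w) = if `[< A w >] then 1 else 0.
  move=> w Dw; rewrite /Y; congr (if _ then _ else _); apply: asbool_equiv_eq.
  split; first by move=> [].
  by move=> Aw; split => //; split; [exact: fineS_ge0|rewrite /= fineK //; exact: Sf].
have key : forall w, D w -> ~ B0 w -> Y (fine (S w), w) =
    (if ((fine (S w))%:E < tau w)%E then Y' (fine (S w), w)
     else Y'' (tau w, (fine (S w), w))).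
  move=> w Dw nB; apply: contrapT => hne; apply: nB; apply: Ex.
  exists (fine (S w)); split => //; split; [exact: fineS_ge0|rewrite /= fineK //; exact: Sf].
have ne10 : (1 : R) <> 0 by move=> /eqP; rewrite oner_eq0.
apply/seteqP; split => w [Dw h]; split => //.
  case: (pselect (B0 w)) => nB; first by right.
  left; split => //; have := key w Dw nB; rewrite hY // asboolT //.
  rewrite fineK; last exact: Sf.
  case: ifPn => tS hb.
    left; split; first by apply: nmid_gt => h'; move: tS; rewrite ltNge h'.
    by rewrite /preimage /f' /= Dw -hb.
  right; split => //; split; first by move: tS; rewrite -leNgt.
  split; first by split => /=; [exact: htau_pos|exact: fineS_ge0].
  by rewrite /preimage /= -hb.
move: h => [[[[hn hf]|[_ [tS [_ h2]]]] nB]|[Aw _]] //; apply: contrapT => nA;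
  have := key w Dw nB; rewrite hY // asboolF // fineK; try exact: Sf.
- have tS : ~ (tau w <= S w)%E.
    move=> hh; move: hn; rewrite /= nmid_le // => e; move: (le_lt_trans hh Dw).
    by rewrite e ltxx.
  rewrite ifT; last by rewrite ltNge; apply/negP.
  by move: hf; rewrite /preimage /f' /= Dw => -> /esym.
- rewrite ifF; last by rewrite ltNge tS.
  by move: h2; rewrite /preimage /= => -> /esym.
Qed.


Lemma meas_sa : sigma_algebra setT (@measurable _ Omega).
Proof.
split; first exact: measurable0.
  by move=> A mA; rewrite setTD; exact: measurableC.
by move=> A mA; exact: bigcupT_measurable.
Qed.

Lemma sTF_meas : sigma_tau_Finf F tau `<=` measurable.
Proof.
apply: smallest_sub; first exact: meas_sa.
move=> A [hA|hA].
  move: A hA; apply: smallest_sub; first exact: meas_sa.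
  move=> A [B mB <-]; rewrite -(setTI (tau @^-1` B)); exact: htau_meas.
move: A hA; apply: smallest_sub; first exact: meas_sa.
by move=> A [t t0 hA]; exact: (hF_meas t0).
Qed.

Lemma sTF_sa : sigma_algebra setT (sigma_tau_Finf F tau).
Proof. exact: smallest_sigma_algebra. Qed.

Lemma null_union (B : nat -> set Omega) : (forall k, sigma_tau_Finf F tau (B k)) ->
  (forall k, Q (B k) = 0%E) -> Q (\bigcup_k B k) = 0%E.
Proof.
move=> hB QB; apply/eqP; rewrite eq_le measure_ge0 andbT.
have mB : forall k, measurable (B k) by move=> k; exact: sTF_meas.
have h : (Q (\bigcup_k B k) <= \sum_(k <oo) Q (B k))%E.
  apply: (measure_sigma_subadditive Q) => //; exact: bigcupT_measurable.
by move: h; rewrite eseries0 // => i _ _; exact: QB.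
Qed.

Definition rep (C : set Omega) : Prop :=
  exists p : set (R * Omega) * set (\bar R * (R * Omega)) * set Omega,
  optional F p.1.1 /\ prod_sys (optional F) p.1.2 /\
  sigma_tau_Finf F tau p.2 /\ Q p.2 = 0%E /\
  forall w, D w -> ~ p.2 w -> (C w <->
    (if ((fine (S w))%:E < tau w)%E then p.1.1 (fine (S w), w)
     else p.1.2 (tau w, (fine (S w), w)))).

Lemma rep_sa : sigma_algebra setT rep.
Proof.
have hO : sigma_algebra Dom (optional F) := smallest_sigma_algebra _ _.
have hP : sigma_algebra Dom2 (prod_sys (optional F)) := smallest_sigma_algebra _ _.
split.
- exists (set0, set0, set0); split; first exact: (sa0 hO).
  split; first exact: (sa0 hP).
  split; first exact: (sa0 sTF_sa).
  split; first exact: measure0.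
  by move=> w _ _ /=; case: ifP.
- move=> A [[[E1 E2] B] [h1 [h2 [h3 [h4 h5]]]]].
  exists (Dom `\` E1, Dom2 `\` E2, B); split; first exact: (saD hO).
  split; first exact: (saD hP).
  split => //; split => // w Dw nB /=; have := h5 w Dw nB => /=.
  case: ifP => _ e; split.
  - by move=> [_ nA]; split; [exact: fineS_ge0|rewrite -e].
  - by move=> [_ nE]; split => // Aw; apply: nE; apply/e.
  - move=> [_ nA]; split; last by rewrite -e.
    by split => /=; [exact: htau_pos|exact: fineS_ge0].
  - by move=> [_ nE]; split => // Aw; apply: nE; apply/e.
- move=> A hA; have [p hp] := choice hA.
  exists (\bigcup_n (p n).1.1, \bigcup_n (p n).1.2, \bigcup_n (p n).2).
  split; first by apply: (saU hO) => n; case: (hp n).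
  split; first by apply: (saU hP) => n; case: (hp n) => _ [].
  split; first by apply: (saU sTF_sa) => n; case: (hp n) => _ [_ []].
  split; first by apply: null_union => n; [case: (hp n) => _ [_ []]|case: (hp n) => _ [_ [_ []]]].
  move=> w Dw nB /=.
  have e : forall n, A n w <-> (if ((fine (S w))%:E < tau w)%E then (p n).1.1 (fine (S w), w)
     else (p n).1.2 (tau w, (fine (S w), w))).
    move=> n; case: (hp n) => _ [_ [_ [_ h5]]]; apply: h5 => // Bn; apply: nB.
    by exists n.
  case: ifP => h; split.
  - by move=> [n _ An]; exists n => //; move/e: An; rewrite h.
  - by move=> [n _ En]; exists n => //; apply/e; rewrite h.
  - by move=> [n _ An]; exists n => //; move/e: An; rewrite h.
  - by move=> [n _ En]; exists n => //; apply/e; rewrite h.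
Qed.


Lemma mge0 : measurable [set x : \bar R | (0 <= x)%E].
Proof.
rewrite (_ : [set x : \bar R | (0 <= x)%E] = `[0%E, +oo[%classic).
  exact: emeasurable_itv.
by apply/seteqP; split => x /=; rewrite in_itv /= andbT.
Qed.

Lemma RHS_rep : RHS `<=` rep.
Proof.
have hO : sigma_algebra Dom (optional F) := smallest_sigma_algebra _ _.
have hP : sigma_algebra Dom2 (prod_sys (optional F)) := smallest_sigma_algebra _ _.
have sTF0 : sigma_tau_Finf F tau set0 := sa0 sTF_sa.
apply: smallest_sub; first exact: rep_sa.
move=> A [hA|hA]; last first.
  move: A hA; apply: smallest_sub; first exact: rep_sa.
  move=> E [f [B [[X [mX ->]] [mB ->]]]].
  exists (Dom `&` X @^-1` B, [set x | (0 <= x)%E] `*` (Dom `&` X @^-1` B), set0).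
  split; first exact: mX.
  split.
    apply: sub_sigma_algebra; exists [set x | (0 <= x)%E], (Dom `&` X @^-1` B).
    by split; [exact: mge0|split => //; split => //; exact: mX].
  split => //; split; first exact: measure0.
  move=> w Dw _ /=; rewrite /preimage /= Dw.
  case: ifP => _; split.
  - by move=> h; split => //; exact: fineS_ge0.
  - by case.
  - by move=> h; split; [exact: htau_pos|split => //; exact: fineS_ge0].
  - by case=> _ [].
move: A hA; apply: smallest_sub; first exact: rep_sa.
move=> A [hA|hA].
  move: A hA; apply: smallest_sub; first exact: rep_sa.
  move=> E [B [hB [QB EB]]]; exists (set0, set0, B).
  split; first exact: (sa0 hO).
  split; first exact: (sa0 hP).
  split => //; split => // w Dw nB /=.
  by split; [move=> /EB|case: ifP].
move: A hA; apply: smallest_sub; first exact: rep_sa.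
move=> E [B mB <-].
exists (Dom `&` [set _ | B +oo%E], (B `&` [set x | (0 <= x)%E]) `*` Dom, set0).
split.
  case: (pselect (B +oo%E)) => hB.
    by rewrite (_ : _ `&` _ = Dom); [exact: (saT hO)|apply/seteqP; split => x // []].
  by rewrite (_ : _ `&` _ = set0); [exact: (sa0 hO)|apply/seteqP; split => x // []].
split.
  apply: sub_sigma_algebra; exists (B `&` [set x | (0 <= x)%E]), Dom.
  split; first by apply: measurableI => //; exact: mge0.
  by split; [exact: subIsetr|split => //; exact: (saT hO)].
split => //; split; first exact: measure0.
move=> w Dw _ /=; have Sf : S w \is a fin_num by rewrite ge0_fin_numE ?S_ge0.
rewrite fineK //; case: ifPn => h.
  rewrite nmid_gt; last by move=> h'; move: h; rewrite ltNge h'.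
  by split; [move=> hB; split => //; exact: fineS_ge0|case].
rewrite nmid_le; last by move: h; rewrite -leNgt.
split; first by move=> hB; split; [split => //; exact: htau_pos|exact: fineS_ge0].
by case=> [[]].
Qed.

Lemma bwd : trace D (sys_at_stop G S) = trace D RHS -> Lo Q F tau (graph S).
Proof.
move=> htr; split; first exact: graph_opt.
split; first by move=> p [].
move=> Y mY.
have hk : forall k, exists p : set (R * Omega) * set (\bar R * (R * Omega)) * set Omega,
  optional F p.1.1 /\ prod_sys (optional F) p.1.2 /\
  sigma_tau_Finf F tau p.2 /\ Q p.2 = 0%E /\
  forall w, D w -> ~ p.2 w -> (Y (fine (S w), w) < qseq R k <->
    (if ((fine (S w))%:E < tau w)%E then p.1.1 (fine (S w), w)
     else p.1.2 (tau w, (fine (S w), w)))).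
  move=> k.
  have hL : trace D (sys_at_stop G S) (D `&` [set w | Y (fine (S w), w) < qseq R k]).
    exists (D `&` [set w | Y (fine (S w), w) < qseq R k]); last by rewrite setIA setIid.
    rewrite (_ : [set w | Y (fine (S w), w) < qseq R k] = [set w | `]-oo, qseq R k[%classic (Y (fine (S w), w))]).
      exact: (optY mY (measurable_itv _)).
    by apply/seteqP; split => w /=; rewrite in_itv.
  move: hL; rewrite htr => -[C hC eC].
  have [p [h1 [h2 [h3 [h4 h5]]]]] := RHS_rep hC.
  exists p; split => //; split => //; split => //; split => // w Dw nB.
  rewrite -(h5 w Dw nB); split => h.
    have : (D `&` [set w | Y (fine (S w), w) < qseq R k]) w by [].
    by rewrite -eC => -[].
  have : (D `&` C) w by [].
  by rewrite eC => -[_ []].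
have [p hp] := choice hk.
exists (fun x => fine (ereal_inf [set (qseq R k)%:E | k in [set k | (p k).1.1 x]])).
exists (fun x => fine (ereal_inf [set (qseq R k)%:E | k in [set k | (p k).1.2 x]])).
split; first by apply: inf_meas (smallest_sigma_algebra _ _) _ => k; case: (hp k).
split; first by apply: inf_meas (smallest_sigma_algebra _ _) _ => k; case: (hp k) => _ [].
exists (\bigcup_k (p k).2).
split; first by apply: (saU sTF_sa) => k; case: (hp k) => _ [_ []].
split; first by apply: null_union => k; [case: (hp k) => _ [_ []]|case: (hp k) => _ [_ [_ []]]].
move=> w [t [[t0 tS] hne]]; apply: contrapT => nB; apply: hne.
have Dw : D w by rewrite /= -tS ltry.
have ft : fine (S w) = t by rewrite -tS.
have e : forall k, Y (t, w) < qseq R k <-> (if (t%:E < tau w)%E then (p k).1.1 (t, w)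
    else (p k).1.2 (tau w, (t, w))).
  move=> k; case: (hp k) => _ [_ [_ [_ h5]]].
  have := h5 w Dw (fun h => nB (ex_intro2 _ _ k I h)); rewrite ft; exact.
case: ifPn => h.
  rewrite (@inf_q _ (Y (t, w))) //= => k.
  by split => hq; [apply/(e k); rewrite h|move/(e k): hq; rewrite h].
rewrite (@inf_q _ (Y (t, w))) //= => k.
by split => hq; [apply/(e k); rewrite (negbTE h)|move/(e k): hq; rewrite (negbTE h)].
Qed.


Lemma main_sec : Lo Q F tau (graph S) <->
  trace [set w | (S w < +oo)%E] (sys_at_stop (Gfilt Q F tau) S) =
  trace [set w | (S w < +oo)%E]
    (sjoin (sjoin (Nsys Q F tau) (sigma_rv (tau_nmid tau S))) (F_at F S)).
Proof.
split; last exact: bwd.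
move=> hL; apply/seteqP; split => X.
  move=> [A hA <-]; have [C hC e] := fwd hL hA.
  by exists C => //; rewrite e.
by move=> [C hC <-]; exists C => //; exact: RHS_sas.
Qed.

End Model.

Theorem mainTheorem7 (R : realType) (d : measure_display)
  (Omega : measurableType d) (Q : probability Omega R)
  (F : R -> set_system Omega) (tau : Omega -> \bar R) (S : Omega -> \bar R)
  (hF_sigma : forall t : R, 0 <= t -> sigma_algebra setT (F t))
  (hF_meas : forall t : R, 0 <= t -> F t `<=` measurable)
  (hF_mono : forall s t : R, 0 <= s -> s <= t -> F s `<=` F t)
  (hF_rc : forall t : R, 0 <= t ->
     F t = \bigcap_(s in [set s : R | t < s]) F s)
  (hF0 : negl_sys Q (sys_inf F) `<=` F 0)
  (htau_pos : forall w, (0 <= tau w)%E)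
  (htau_meas : measurable_fun setT tau)
  (hS : stopping_time (Gfilt Q F tau) S) :
  Lo Q F tau (graph S) <->
  trace [set w | (S w < +oo)%E] (sys_at_stop (Gfilt Q F tau) S) =
  trace [set w | (S w < +oo)%E]
    (sjoin (sjoin (Nsys Q F tau) (sigma_rv (tau_nmid tau S))) (F_at F S)).
Proof. exact: main_sec. Qed.
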